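(* There is a family of $1$-dimensional Hegselmann–Krause systems with $n$ agents (for infinitely many $n$) and a fixed confidence bound $\varepsilon>0$, whose social networks have $|E|=\Theta(n^2)$ edges and whose initial states $S_0$ satisfy $\Phi(S_0)=\Theta(n^2\varepsilon^2)$, such that the expected potential drop in the first step under uniform random asynchronous updates is $\mathbb{E}[\Phi(S_0)-\Phi(S_1)]=\Theta(\varepsilon^2/n^3)$.
   Context: A $1$-dimensional Hegselmann–Krause system has a finite undirected graph $G=(V,E)$ (social network) with $n=|V|$ agents, a confidence bound $\varepsilon>0$, and positions $x_v(t)\in\mathbb{R}$. The influencing neighborhood is $N_v(t)=\{u:\{u,v\}\in E,\ |x_u(t)-x_v(t)|\le\varepsilon\}\cup\{v\}$. Uniform random asynchronous updates: at each step $t$ one agent $v$ is chosen uniformly at random and set to $x_v(t+1)=\frac{1}{|N_v(t)|}\sum_{u\in N_v(t)}x_u(t)$, others unchanged; $S_t$ denotes the state at time $t$. The potential of a state is $\Phi(S)=\sum_{\{u,v\}\in E}\min\{|x_u-x_v|^2,\varepsilon^2\}$. *)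

(* Defs.v *)
From mathcomp Require Import all_boot all_order all_algebra.
Set Implicit Arguments. Unset Strict Implicit. Unset Printing Implicit Defensive.
Import Order.TTheory GRing.Theory Num.Theory.
Local Open Scope ring_scope.

Definition simple_graph (n : nat) (e : rel 'I_n) : Prop :=
  symmetric e /\ irreflexive e.

Definition num_edges (n : nat) (e : rel 'I_n) : nat :=
  #|[set p : 'I_n * 'I_n | (p.1 < p.2)%N && e p.1 p.2]|.

Section HK.
Variable R : realFieldType.

Definition nbhd (n : nat) (e : rel 'I_n) (eps : R) (x : 'I_n -> R) (v : 'I_n)
  : {set 'I_n} :=
  [set u | (e u v && (`|x u - x v| <= eps)) || (u == v)].

Definition hk_update (n : nat) (e : rel 'I_n) (eps : R) (x : 'I_n -> R)
  (v : 'I_n) : 'I_n -> R :=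
  fun w => if w == v then
             (\sum_(u in nbhd e eps x v) x u) / (#|nbhd e eps x v|)%:R
           else x w.

Definition potential (n : nat) (e : rel 'I_n) (eps : R) (x : 'I_n -> R) : R :=
  \sum_(p : 'I_n * 'I_n | (p.1 < p.2)%N && e p.1 p.2)
     Num.min ((x p.1 - x p.2) ^+ 2) (eps ^+ 2).

Definition expected_drop (n : nat) (e : rel 'I_n) (eps : R) (x : 'I_n -> R) : R :=
  (n%:R)^-1 * \sum_(v : 'I_n) (potential e eps x - potential e eps (hk_update e eps x v)).
End HK.

(* Main.v *)
Require Import Defs.
From mathcomp Require Import all_boot all_order all_algebra.
From mathcomp Require Import ring lra zify.
Import Order.TTheory GRing.Theory Num.Theory.
Local Open Scope ring_scope.

Section Constr.
Variable R : realFieldType.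
Variable n' : nat.
Local Notation n := n'.+2.

Definition o1 : 'I_n := @Ordinal n 1 isT.
Definition eK : rel 'I_n := fun i j => i != j.

Definition good (z : 'I_n -> R) :=
  [/\ forall i : 'I_n, (2 <= i)%N -> z i = (nat_of_ord i)%:R *+ 2,
      forall i : 'I_n, nat_of_ord i = 0%N -> 0 <= z i <= 1 &
      forall i : 'I_n, nat_of_ord i = 1%N -> 0 <= z i <= 1].

Lemma sep z (i j : 'I_n) : good z -> (i < j)%N -> ~~ ((nat_of_ord i == 0%N) && (nat_of_ord j == 1%N)) ->
  z i + 2 <= z j.
Proof.
case=> H2 H0 H1 lij nij.
have j2 : (2 <= j)%N.
  case: i lij nij => [[|[|i]] ?] /=; case: j => [[|[|[|j]]] ?] //=.
rewrite (H2 j j2).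
case: (ltnP 1 i) => i2.
  rewrite (H2 i i2).
  have : (i.+1%:R <= j%:R :> R) by rewrite ler_nat.
  rewrite -addn1 natrD. lra.
have : (2%:R <= j%:R :> R) by rewrite ler_nat.
move: i2; case: i {lij nij} => [[|[|i]] pi] //= _.
  have := H0 (Ordinal pi) erefl. lra.
have := H1 (Ordinal pi) erefl. lra.
Qed.

Lemma edgesE : (num_edges eK)%:R =
  \sum_(p : 'I_n * 'I_n | (p.1 < p.2)%N && eK p.1 p.2) (1:R).
Proof.
rewrite /num_edges -sum1_card natr_sum; apply: eq_bigl => p; by rewrite inE.
Qed.

Lemma potE z : good z ->
  potential eK 1 z = (num_edges eK)%:R - 1 + (z ord0 - z o1)^+2.
Proof.
move=> gz; rewrite edgesE /potential (bigD1 (ord0, o1)) // [in RHS](bigD1 (ord0,o1)) //.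
rewrite (eq_bigr (fun _ => 1)); last first.
  move=> -[i j]; rewrite /= => /andP[/andP[lij _] nq].
  rewrite expr1n min_r //.
  have h : ~~ ((nat_of_ord i == 0%N) && (nat_of_ord j == 1%N)).
    apply/negP => /andP[/eqP i0 /eqP j1]; move/negP: nq; apply.
    by apply/eqP; congr pair; apply/val_inj.
  have := @sep z i j gz lij h. nra.
case: gz => _ H0 H1.
have /andP[h0 h0'] := H0 ord0 erefl; have /andP[h1 h1'] := H1 o1 erefl.
rewrite expr1n min_l; last by nra.
rewrite /=; lra.
Qed.

Lemma far z (u v : 'I_n) : good z -> (2 <= u)%N || (2 <= v)%N -> u != v ->
  (`|z u - z v| <= 1) = false.
Proof.
move=> gz h2 nuv; apply/negP; rewrite ler_norml => /andP[a b].
case: (ltngtP u v) => huv.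
- have h : ~~ ((nat_of_ord u == 0%N) && (nat_of_ord v == 1%N)).
    by case/orP: h2 => h; apply/negP => /andP[/eqP e1 /eqP e2]; move: h; rewrite ?e1 ?e2.
  have := @sep z u v gz huv h; lra.
- have h : ~~ ((nat_of_ord v == 0%N) && (nat_of_ord u == 1%N)).
    by case/orP: h2 => h; apply/negP => /andP[/eqP e1 /eqP e2]; move: h; rewrite ?e1 ?e2.
  have := @sep z v u gz huv h; lra.
- by move/eqP: nuv; apply; apply/val_inj.
Qed.

Definition xK : 'I_n -> R := fun i =>
  if nat_of_ord i == 0%N then 0 else if nat_of_ord i == 1%N then (n%:R)^-1
  else (nat_of_ord i)%:R *+ 2.

Lemma n_pos : 0 < (n%:R : R). Proof. by rewrite ltr0n. Qed.
Lemma inv_bnd : 0 <= (n%:R : R)^-1 <= 1.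
Proof.
rewrite invr_ge0 ltW ?n_pos //= invf_le1 ?n_pos // (ler_nat R 1 n) //.
Qed.

Lemma good_xK : good xK.
Proof.
split => i; rewrite /xK.
- by case: i => [[|[|i]] ?].
- by move=> ->; rewrite /= lexx ler01.
- by move=> ->; rewrite /= inv_bnd.
Qed.

Lemma nb_small (v : 'I_n) : (2 <= v)%N -> nbhd eK 1 xK v = [set v].
Proof.
move=> hv; apply/setP => u; rewrite !inE /eK.
case: (eqVneq u v) => [->|nuv]; first by rewrite orbT.
by rewrite (@far xK u v good_xK) ?hv ?orbT ?andbF.
Qed.

Lemma upd_big (v : 'I_n) : (2 <= v)%N -> hk_update eK 1 xK v =1 xK.
Proof.
move=> hv w; rewrite /hk_update nb_small // big_set1 cards1 divr1.
by case: (eqVneq w v) => [->|].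
Qed.

Lemma nb01 (v : 'I_n) : (v == ord0) || (v == o1) -> nbhd eK 1 xK v = [set ord0; o1].
Proof.
move=> hv; apply/setP => u; rewrite !inE /eK.
case: (eqVneq u v) => [->|nuv]; first by rewrite orbT hv.
rewrite /=.
case: (ltnP 1 u) => hu.
  rewrite (@far xK u v good_xK) ?hu //=.
  by apply/esym/negP => /orP[] /eqP e; move: hu; rewrite e.
have [u0|u1] : u = ord0 \/ u = o1.
  by case: u hu {nuv} => [[|[|u]] pu] //= _; [left|right]; apply/val_inj.
- subst u; rewrite eqxx /=.
  have -> : v = o1 by case/orP: hv nuv => /eqP -> //; rewrite eqxx.
  have /andP[i0 i1] := inv_bnd.
  by rewrite /xK /= sub0r normrN ger0_norm ?i0 ?i1.
- subst u; rewrite eqxx orbT /=.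
  have -> : v = ord0 by case/orP: hv nuv => /eqP -> //; rewrite eqxx.
  have /andP[i0 i1] := inv_bnd.
  by rewrite /xK /= subr0 ger0_norm ?i0 ?i1.
Qed.

Lemma upd01 (v : 'I_n) : (v == ord0) || (v == o1) -> forall w,
  hk_update eK 1 xK v w = if w == v then (n%:R)^-1 / 2 else xK w.
Proof.
move=> hv w; rewrite /hk_update nb01 // big_setU1 ?inE // big_set1 cards2 /xK /=.
by rewrite add0r.
Qed.

Lemma good_upd (v : 'I_n) : (v == ord0) || (v == o1) -> good (hk_update eK 1 xK v).
Proof.
move=> hv; have [g2 g0 g1] := good_xK.
have /andP[i0 i1] := inv_bnd.
have hb : 0 <= (n%:R : R)^-1 / 2 <= 1.
  move: i0 i1; move: ((n%:R : R)^-1) => t t0 t1.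
  rewrite divr_ge0 //= ler_pdivrMr //; lra.
split => i; rewrite upd01 //.
- move=> hi; rewrite ifN ?g2 //; apply/negP => /eqP e; move: hv hi; rewrite e.
  by case/orP => /eqP ->.
- by move=> h; case: ifP => _ //; apply: g0.
- by move=> h; case: ifP => _ //; apply: g1.
Qed.

Lemma pot_upd (v : 'I_n) : (v == ord0) || (v == o1) ->
  potential eK 1 (hk_update eK 1 xK v) = (num_edges eK)%:R - 1 + (n%:R)^-2 / 4.
Proof.
move=> hv; rewrite potE; last exact: good_upd.
rewrite !(@upd01 v hv).
case/orP: hv => /eqP ->; rewrite /= /xK /=.
- have := n_pos; move: (n%:R : R) => m hm; field; rewrite ?gt_eqF //.
- have := n_pos; move: (n%:R : R) => m hm; field; rewrite ?gt_eqF //.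
Qed.

Lemma pot_x : potential eK 1 xK = (num_edges eK)%:R - 1 + (n%:R)^-2.
Proof.
rewrite potE; last exact: good_xK.
rewrite /xK /=.
have := n_pos; move: (n%:R : R) => m hm; field; rewrite ?gt_eqF //.
Qed.

Lemma drop_sum : \sum_(v : 'I_n) (potential eK 1 xK - potential eK 1 (hk_update eK 1 xK v))
  = 3 / 2 * (n%:R)^-2.
Proof.
rewrite (bigD1 ord0) // (bigD1 o1) //= big1.
  rewrite pot_x !pot_upd ?eqxx ?orbT //.
  have := n_pos; move: (n%:R : R) => m hm; field; rewrite ?gt_eqF //.
move=> v /andP[h1 h0].
have hv : (2 <= v)%N.
  by case: v h0 h1 => [[|[|v]] pv].
apply/eqP; rewrite subr_eq0 /potential; apply/eqP; apply: eq_bigr => p _.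
by rewrite !upd_big.
Qed.

Lemma exp_drop : expected_drop eK 1 xK = 3 / 2 / (n%:R) ^+ 3.
Proof.
rewrite /expected_drop drop_sum.
have := n_pos; move: (n%:R : R) => m hm; field; rewrite ?gt_eqF //.
Qed.

Lemma edges_le : (num_edges eK <= n * n)%N.
Proof. by rewrite /num_edges; apply: leq_trans (max_card _) _; rewrite card_prod card_ord. Qed.

Lemma edges_ge k : (k + k <= n)%N -> (k * k <= num_edges eK)%N.
Proof.
move=> hk.
pose f := fun q : 'I_k * 'I_k => ((inord q.1 : 'I_n), (inord (q.2 + k) : 'I_n)).
have h1 : forall q : 'I_k * 'I_k, (nat_of_ord q.1 < n'.+2)%N.
  move=> q; apply: leq_trans hk; apply: leq_trans (ltn_ord q.1) _; exact: leq_addr.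
have h2 : forall q : 'I_k * 'I_k, (q.2 + k < n'.+2)%N.
  move=> q; apply: leq_trans hk; by rewrite ltn_add2r.
have finj : injective f.
  move=> [a b] [c d] /= [] e1 e2.
  have := congr1 (@nat_of_ord _) e1; have := congr1 (@nat_of_ord _) e2.
  rewrite !inordK ?(h1 (a,b)) ?(h1 (c,d)) ?(h2 (a,b)) ?(h2 (c,d)) // => /eqP.
  rewrite eqn_add2r => /eqP e3 e4.
  by congr pair; apply/val_inj.
have <- : #|[set f q | q in predT]| = (k * k)%N.
  by rewrite card_imset // cardT -cardE card_prod card_ord.
rewrite /num_edges; apply: subset_leq_card; apply/subsetP => p /imsetP [q _ ->].
rewrite inE /= /eK !inordK ?h1 ?h2 //.
have : (q.1 < q.2 + k)%N by apply: leq_trans (ltn_ord q.1) _; exact: leq_addl.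
move=> lt; rewrite lt /=; apply/negP => /eqP e.
by move: (congr1 (@nat_of_ord _) e); rewrite !inordK ?h1 ?h2 // => e'; move: lt; rewrite e' ltnn.
Qed.

End Constr.

Theorem theorem3 (R : realFieldType) :
  exists (eps : R), 0 < eps /\
  exists (a A b B c C : R), 0 < a /\ 0 < A /\ 0 < b /\ 0 < B /\ 0 < c /\ 0 < C /\
  forall N : nat, exists n : nat, (N <= n)%N /\
    exists (e : rel 'I_n) (x : 'I_n -> R),
      simple_graph e /\
      a * n%:R ^+ 2 <= (num_edges e)%:R <= A * n%:R ^+ 2 /\
      b * n%:R ^+ 2 * eps ^+ 2 <= potential e eps x <= B * n%:R ^+ 2 * eps ^+ 2 /\
      c * eps ^+ 2 / n%:R ^+ 3 <= expected_drop e eps x <= C * eps ^+ 2 / n%:R ^+ 3.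
Proof.
exists 1; split; first exact: ltr01.
exists (1/4), 1, (1/8), 2, (3/2), (3/2).
do 6 (split; first lra).
move=> N; exists (N + N).+4; split; first by lia.
exists (@eK (N + N).+2), (@xK R (N + N).+2).
split.
  by split; [move=> i j; rewrite /eK eq_sym | move=> i; rewrite /eK eqxx].
set n := (N + N).+4.
have hn : n = (N.+2 + N.+2)%N by rewrite /n addSn addnS addSn addnS.
have hE1 := @edges_ge (N + N).+2 N.+2 (eq_leq (esym hn)).
have hE2 := @edges_le (N + N).+2.
rewrite -/n in hE1 hE2.
have hE1' : ((N.+2)%:R * (N.+2)%:R <= (num_edges (@eK (N + N).+2))%:R :> R).
  by rewrite -natrM ler_nat.
have hE2' : ((num_edges (@eK (N + N).+2))%:R <= n%:R * n%:R :> R).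
  by rewrite -natrM ler_nat.
have hnK : (n%:R : R) = (N.+2)%:R + (N.+2)%:R by rewrite hn natrD.
have hK : (2 : R) <= (N.+2)%:R by rewrite (ler_nat R 2 N.+2).
have hnpos : (1 : R) <= n%:R ^+ 2.
  rewrite hnK; nra.
have ht0 : 0 <= (n%:R : R) ^-2 by rewrite invr_ge0 exprn_ge0 ?ler0n.
have ht1 : (n%:R : R) ^-2 <= 1 by rewrite invf_le1 // (lt_le_trans ltr01).
rewrite pot_x exp_drop expr1n !mulr1 lexx /=.
move: ht0 ht1 hE1' hE2' hnpos.
rewrite hnK.
move: ((N.+2)%:R : R) hK => K hK.
move: ((num_edges (@eK (N + N).+2))%:R : R) => E.
move: ((K + K)^-2) => t ht0 ht1 h1 h2 h3.
rewrite ?andbT; (repeat split); try (apply/andP; split); try done; nra.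
Qed.
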